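(* Let $X$, $Y_k$ ($k\in\mathbb N$) and norms $\|\cdot\|_{X\oplus Y_k}$ be as in the generalized $\ell^2$-sum setting. (A) For every $x+\sum_k y_k\in\Sigma(X\oplus Y_k)$, $$\max\Big\{\|x\|_X,\tfrac12\Big(\sum_k\|y_k\|_{Y_k}^2\Big)^{1/2}\Big\}\le\Big\|x+\sum_k y_k\Big\|_\Sigma\le\|x\|_X+\Big(\sum_k\|y_k\|_{Y_k}^2\Big)^{1/2}.$$ In particular, $(\Sigma(X\oplus Y_k),\|\cdot\|_\Sigma)$ is isomorphic to the standard $\ell^2$-sum of $X,Y_1,Y_2,\dots$. (B) The dual norm of $\|\cdot\|_\Sigma$ satisfies, for $x^*\in X^*$, $y_k^*\in Y_k^*$ with $\sum_k\|y_k^*\|_{Y_k}^2<\infty$, $$\max\Big\{\|x^*\|_X,\Big(\sum_k\|y_k^*\|_{Y_k}^2\Big)^{1/2}\Big\}\le\Big\|x^*+\sum_k y_k^*\Big\|_\Sigma\le\|x^*\|_X+2\Big(\sum_k\|y_k^*\|_{Y_k}^2\Big)^{1/2}.$$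
   Context: Setting: $(X,\|\cdot\|_X)$ and $(Y_k,\|\cdot\|_{Y_k})$, $k\in\mathbb N$, are Banach spaces; for each $k$, $\|\cdot\|_{X\oplus Y_k}$ is a norm on $X\oplus Y_k$ coinciding with $\|\cdot\|_X$ on $X$ and with $\|\cdot\|_{Y_k}$ on $Y_k$, and monotone: $\|x+y_k\|_{X\oplus Y_k}\ge\|x\|_X$. Duals of direct sums are identified with direct sums of duals via $(x^*+y^* )(x+y)=x^*(x)+y^*(y)$. $\Lambda(X\oplus Y_k)$ is the set of functionals $x^*+\sum_k\alpha_ky_k^*$ with $x^*\in X^*$, $y_k^*\in Y_k^*$, $\|x^*+y_k^*\|_{X\oplus Y_k}\le1$ for all $k$, $0\le\alpha_k\le1$, $\sum\alpha_k^2\le1$. $\Sigma(X\oplus Y_k)=\{x+y_1+y_2+\dots:x\in X,y_k\in Y_k,\sum\|y_k\|_{Y_k}^2<\infty\}$ with $\|z\|_\Sigma=\sup\{|z^*(z)|:z^*\in\Lambda(X\oplus Y_k)\}$; the dual norm is also denoted $\|\cdot\|_\Sigma$. *)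

(* Defs.v *)
From HB Require Import structures.
From mathcomp Require Import all_boot all_order all_algebra.
From mathcomp Require Import all_classical all_reals all_analysis.
Set Implicit Arguments. Unset Strict Implicit. Unset Printing Implicit Defensive.
Import Order.TTheory GRing.Theory Num.Theory.
Import numFieldNormedType.Exports.
Local Open Scope classical_set_scope.
Local Open Scope ring_scope.

Definition rsum (R : realType) (u : nat -> R) : R := limn (series u).

Definition summable_nn (R : realType) (u : nat -> R) : Prop := cvgn (series u).

(* Elements of the dual V^star: continuous (= bounded) linear functionals. *)
Definition dual_elt (R : realType) (V : normedModType R) (f : V -> R) : Prop :=
  (forall (a : R) (u v : V), f (a *: u + v) = a * f u + f v) /\
  exists C : R, forall v : V, `|f v| <= C * `|v|.

Definition dnorm (R : realType) (V : normedModType R) (f : V -> R) : R :=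
  sup [set r | exists v : V, `|v| <= 1 /\ r = `|f v|].

(* N is a norm on X (+) Y (given on pairs (x, y), i.e. x + y), coinciding
   with the norm of X on X and with the norm of Y on Y, and monotone. *)
Definition sum_norm (R : realType) (X Y : normedModType R) (N : X -> Y -> R) : Prop :=
  [/\ (forall x y, N x y = 0 -> x = 0 /\ y = 0),
      (forall x1 y1 x2 y2, N (x1 + x2) (y1 + y2) <= N x1 y1 + N x2 y2),
      (forall (a : R) x y, N (a *: x) (a *: y) = `|a| * N x y),
      (forall x, N x 0 = `|x|) /\ (forall y, N 0 y = `|y|) &
      (forall x y, `|x| <= N x y)].

(* Dual norm of x^star + y^star in dual of (X (+) Y, N), via (x^star+y^star)(x+y) = x^star(x)+y^star(y). *)
Definition dnorm_sum (R : realType) (X Y : normedModType R) (N : X -> Y -> R)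
  (xs : X -> R) (ys : Y -> R) : R :=
  sup [set r | exists x y, N x y <= 1 /\ r = `|xs x + ys y|].

Section Sigma.
Variables (R : realType) (X : normedModType R) (Y : nat -> normedModType R)
  (N : forall k, X -> Y k -> R).

(* y = (y_k) with sum_k ||y_k||^2 < oo, i.e. x + y_1 + y_2 + ... in Sigma. *)
Definition in_Sigma (y : forall k, Y k) : Prop :=
  summable_nn (fun k => `|y k| ^+ 2).

(* x^star + sum_k alpha_k y_k^star belongs to Lambda(X (+) Y_k). *)
Definition in_Lambda (xs : X -> R) (ys : forall k, Y k -> R) (al : nat -> R) : Prop :=
  [/\ dual_elt xs, (forall k, dual_elt (ys k)),
      (forall k, dnorm_sum (@N k) xs (ys k) <= 1),
      (forall k, 0 <= al k <= 1) &
      summable_nn (fun k => al k ^+ 2) /\ rsum (fun k => al k ^+ 2) <= 1].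

Definition Lambda_eval (xs : X -> R) (ys : forall k, Y k -> R) (al : nat -> R)
  (x : X) (y : forall k, Y k) : R :=
  xs x + rsum (fun k => al k * ys k (y k)).

Definition Sigma_norm (x : X) (y : forall k, Y k) : R :=
  sup [set r | exists xs ys al, in_Lambda xs ys al /\ r = `|Lambda_eval xs ys al x y|].

(* dual norm || x^star + sum_k y_k^star ||_Sigma, the functional acting on Sigma by
   (x + sum_k y_k) |-> x^star(x) + sum_k y_k^star(y_k). *)
Definition Sigma_dnorm (xs : X -> R) (ys : forall k, Y k -> R) : R :=
  sup [set r | exists x y, in_Sigma y /\ Sigma_norm x y <= 1 /\
                           r = `|xs x + rsum (fun k => ys k (y k))|].

Definition l2sum_norm (x : X) (y : forall k, Y k) : R :=
  Num.sqrt (`|x| ^+ 2 + rsum (fun k => `|y k| ^+ 2)).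

End Sigma.

(* Main.v *)
Require Import Defs.
From HB Require Import structures.
From mathcomp Require Import all_boot all_order all_algebra.
From mathcomp Require Import all_classical all_reals all_analysis.
From mathcomp Require Import ring lra.
Import Order.TTheory GRing.Theory Num.Theory.
Import numFieldNormedType.Exports.
Set Implicit Arguments. Unset Strict Implicit. Unset Printing Implicit Defensive.
Local Open Scope classical_set_scope.
Local Open Scope ring_scope.

Lemma sq_le (R : realType) (x y : R) : 0 <= x -> 0 <= y -> x ^+ 2 <= y ^+ 2 -> x <= y.
Proof. move=> x0 y0; rewrite ler_sqr //. Qed.

Lemma cs_fin (R : realType) (a b : nat -> R) n : (forall k, 0 <= a k) -> (forall k, 0 <= b k) ->
 (\sum_(k < n) a k * b k) ^+ 2 <= (\sum_(k < n) a k ^+ 2) * (\sum_(k < n) b k ^+ 2).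
Proof.
move=> a0 b0; elim: n => [|n IH]; first by rewrite !big_ord0; lra.
rewrite !big_ord_recr /=; move: IH.
set P := \sum_(i < n) _; set A := \sum_(i < n) _; set B := \sum_(i < n) _.
have P0 : 0 <= P by apply: sumr_ge0 => i _; apply: mulr_ge0.
have A0 : 0 <= A by apply: sumr_ge0 => i _; apply: sqr_ge0.
have B0 : 0 <= B by apply: sumr_ge0 => i _; apply: sqr_ge0.
have al := a0 n; have be := b0 n.
set u := a n in al *; set v := b n in be *; move=> IH.
have key : 2 * P * u * v <= A * v ^+ 2 + B * u ^+ 2.
  apply: sq_le; first by rewrite !mulr_ge0.
    by rewrite addr_ge0 // mulr_ge0 // sqr_ge0.
  have h1 : P ^+ 2 * (u * v) ^+ 2 <= A * B * (u * v) ^+ 2 by rewrite ler_wpM2r // sqr_ge0.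
  have h2 : 0 <= (A * v ^+ 2 - B * u ^+ 2) ^+ 2 by apply: sqr_ge0.
  nra.
nra.
Qed.

Section Ser.
Variable R : realType.
Implicit Types u a b : nat -> R.

Lemma rsum_ge_partial u : (forall k, 0 <= u k) -> summable_nn u ->
  forall n, series u n <= rsum u.
Proof.
move=> u0 cu n; apply: nondecreasing_cvgn_le => //.
exact: nondecreasing_series.
Qed.

Lemma rsum_ge_ord u : (forall k, 0 <= u k) -> summable_nn u ->
  forall n, \sum_(k < n) u k <= rsum u.
Proof. move=> u0 cu n; have := rsum_ge_partial u0 cu n; by rewrite seriesEord. Qed.

Lemma rsum_ge0 u : (forall k, 0 <= u k) -> summable_nn u -> 0 <= rsum u.
Proof.
move=> u0 cu; apply: le_trans (rsum_ge_partial u0 cu 0).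
by rewrite /series /= big_geq.
Qed.

Lemma term_le_rsum u k : (forall k, 0 <= u k) -> summable_nn u -> u k <= rsum u.
Proof.
move=> u0 cu; apply: le_trans (rsum_ge_partial u0 cu k.+1).
rewrite /series /= big_nat_recr //= lerDr; apply: sumr_ge0 => i _; exact: u0.
Qed.

Lemma rsum_le_bound u M : summable_nn u -> (forall n, series u n <= M) -> rsum u <= M.
Proof. by move=> cu h; apply: limr_le => //; near=> n; apply: h. Unshelve. all: by end_near. Qed.

Lemma rsum_le u v : summable_nn u -> summable_nn v -> (forall k, u k <= v k) -> rsum u <= rsum v.
Proof. exact: lim_series_le. Qed.

Lemma rsum_scale u c : summable_nn u -> rsum (fun k => c * u k) = c * rsum u.
Proof.
move=> cu; rewrite /rsum; exact: (lim_seriesZ c cu).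
Qed.

Lemma summable_scale u c : summable_nn u -> summable_nn (fun k => c * u k).
Proof.
move=> cu; rewrite /summable_nn.
have -> : series (fun k => c * u k) = (fun n => c * series u n).
  by apply: funext => n; rewrite /series /= -mulr_sumr.
exact: (@is_cvgMl_tmp _ _ _ _ _ c cu).
Qed.

Lemma summable0 : summable_nn (fun _ : nat => (0 : R)).
Proof.
rewrite /summable_nn; have -> : series (fun _ : nat => (0:R)) = fun _ => 0.
  by apply: funext => n; rewrite /series /= big1.
exact: is_cvg_cst.
Qed.

Lemma rsum0 : rsum (fun _ : nat => (0 : R)) = 0.
Proof.
rewrite /rsum; have -> : series (fun _ : nat => (0:R)) = fun _ => 0.
  by apply: funext => n; rewrite /series /= big1.
exact: lim_cst.
Qed.

Lemma summable_le u v : (forall k, 0 <= u k) -> (forall k, u k <= v k) -> summable_nn v -> summable_nn u.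
Proof.
move=> u0 uv cv; apply: (series_le_cvg u0 _ uv cv) => k; exact: le_trans (u0 k) (uv k).
Qed.

Lemma cs_series a b (w : nat -> R) : (forall k, 0 <= a k) -> (forall k, 0 <= b k) ->
  summable_nn (fun k => a k ^+ 2) -> summable_nn (fun k => b k ^+ 2) ->
  (forall k, `|w k| <= a k * b k) ->
  summable_nn w /\
  `|rsum w| <= Num.sqrt (rsum (fun k => a k ^+ 2)) * Num.sqrt (rsum (fun k => b k ^+ 2)).
Proof.
move=> a0 b0 ca cb hw.
have a20 k : 0 <= a k ^+ 2 by apply: sqr_ge0.
have b20 k : 0 <= b k ^+ 2 by apply: sqr_ge0.
have ab0 k : 0 <= a k * b k by apply: mulr_ge0.
have hA0 := rsum_ge0 a20 ca; have hB0 := rsum_ge0 b20 cb.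
have partial n : series (fun k => a k * b k) n <=
    Num.sqrt (rsum (fun k => a k ^+ 2)) * Num.sqrt (rsum (fun k => b k ^+ 2)).
  have -> : series (fun k => a k * b k) n = \sum_(k < n) a k * b k by rewrite seriesEord.
  have P0 : 0 <= \sum_(k < n) a k * b k by apply: sumr_ge0.
  rewrite -(ger0_norm P0) -sqrtr_sqr -(sqrtrM _ hA0) ler_sqrt ?mulr_ge0 //.
  apply: le_trans (cs_fin n a0 b0) _.
  have hA := rsum_ge_ord a20 ca n; have hB := rsum_ge_ord b20 cb n.
  apply: ler_pM => //; apply: sumr_ge0 => i _ //.
have cab : summable_nn (fun k => a k * b k).
  apply: nondecreasing_is_cvgn; first exact: nondecreasing_series.
  by exists (Num.sqrt (rsum (fun k => a k ^+ 2)) * Num.sqrt (rsum (fun k => b k ^+ 2))) => _ [n _ <-]; exact: partial.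
have cnw : cvgn [normed series w].
  exact: (series_le_cvg (fun k => normr_ge0 (w k)) ab0 hw cab).
split; first exact: normed_cvg.
apply: le_trans (lim_series_norm cnw) _.
apply: limr_le => //; near=> n.
apply: le_trans (partial n); rewrite /series /=; apply: ler_sum => i _; exact: hw.
Unshelve. all: by end_near. Qed.

End Ser.

Lemma le_sup_mem (R : realType) (S : set R) r : has_ubound S -> S r -> r <= sup S.
Proof. by move=> h Sr; apply: (ub_le_sup h). Qed.

Section Dual.
Variables (R : realType) (V : normedModType R).
Implicit Types f : V -> R.

Lemma dual_f0 f : dual_elt f -> f 0 = 0.
Proof.
move=> [lin _]; have := lin 1 0 0; rewrite scale1r addr0 mul1r.
move=> h; have : f 0 + f 0 - f 0 = f 0 by lra. rewrite -h subrr. by move=> ->.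
Qed.

Lemma dual_add f u v : dual_elt f -> f (u + v) = f u + f v.
Proof. by move=> [lin _]; have := lin 1 u v; rewrite scale1r mul1r. Qed.

Lemma dual_scale f (a : R) u : dual_elt f -> f (a *: u) = a * f u.
Proof.
move=> df; have [lin _] := df; have := lin a u 0; rewrite addr0 (dual_f0 df) addr0.
by [].
Qed.

Lemma dual_opp f u : dual_elt f -> f (- u) = - f u.
Proof. by move=> df; rewrite -scaleN1r dual_scale // mulN1r. Qed.

Lemma dual0 : dual_elt (fun _ : V => (0 : R)).
Proof. split; first by move=> *; rewrite mulr0 addr0. by exists 0 => v; rewrite normr0 mul0r. Qed.

Lemma dualZ f c : dual_elt f -> dual_elt (fun v => c * f v).
Proof.
move=> df; have [lin [C hC]] := df; split.
  by move=> a u v; rewrite lin mulrDr mulrCA.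
exists (`|c| * C) => v; rewrite normrM -mulrA ler_wpM2l //.
Qed.

Lemma dual_of f : (forall (a : R) u v, f (a *: u + v) = a * f u + f v) ->
  (forall v, `|f v| <= `|v|) -> dual_elt f.
Proof. by move=> lin h; split => //; exists 1 => v; rewrite mul1r. Qed.

Lemma dnorm_has f : dual_elt f ->
  has_ubound [set r | exists v : V, `|v| <= 1 /\ r = `|f v|].
Proof.
move=> [_ [C hC]]; exists `|C| => _ [v [v1 ->]].
apply: le_trans (hC v) _; apply: le_trans (ler_norm _) _.
rewrite normrM normr_id; have := normr_ge0 C; nra.
Qed.

Lemma dnorm_ge0 f : dual_elt f -> 0 <= dnorm f.
Proof.
move=> df; apply: le_trans (le_sup_mem (dnorm_has df) _); first exact: normr_ge0 (f 0).
by exists 0; rewrite normr0.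
Qed.

Lemma dnorm_bound f v : dual_elt f -> `|f v| <= dnorm f * `|v|.
Proof.
move=> df; have [->|v0] := eqVneq v 0; first by rewrite (dual_f0 df) !normr0 mulr0.
have nv : 0 < `|v| by rewrite normr_gt0.
have Hm : [set r | exists v : V, `|v| <= 1 /\ r = `|f v|] (`|f (`|v|^-1 *: v)|).
  exists (`|v|^-1 *: v); split => //.
  by rewrite normrZ ger0_norm ?invr_ge0 ?normr_ge0 // mulVf ?gt_eqF.
have := le_sup_mem (dnorm_has df) Hm.
rewrite dual_scale // normrM ger0_norm ?invr_ge0 ?normr_ge0 // => h.
by rewrite -ler_pdivrMr // mulrC.
Qed.

Lemma dnorm_le f M : dual_elt f -> 0 <= M -> (forall v, `|f v| <= M * `|v|) -> dnorm f <= M.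
Proof.
move=> df M0 h; apply: ge_sup; first by exists `|f 0|, 0; rewrite normr0.
move=> _ [v [v1 ->]]; apply: le_trans (h v) _.
by rewrite -[X in _ <= X]mulr1 ler_wpM2l.
Qed.

Lemma dnorm_adh f e : dual_elt f -> 0 < e -> exists v : V, `|v| <= 1 /\ dnorm f - e <= f v.
Proof.
move=> df e0; have hs : has_sup [set r | exists v : V, `|v| <= 1 /\ r = `|f v|].
  by split; [exists `|f 0|, 0; rewrite normr0 | exact: dnorm_has].
have [_ [v [v1 ->]] hv] := sup_adherent e0 hs.
have [fv0|fv0] := leP 0 (f v).
  by exists v; split => //; move: hv; rewrite ger0_norm // /dnorm => /ltW.
exists (- v); split; first by rewrite normrN.
by rewrite dual_opp //; move: hv; rewrite ltr0_norm // /dnorm => /ltW.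
Qed.

End Dual.

Section SumNorm.
Variables (R : realType) (X Y : normedModType R) (N : X -> Y -> R).
Hypothesis HN : sum_norm N.

Lemma N_tri x1 y1 x2 y2 : N (x1 + x2) (y1 + y2) <= N x1 y1 + N x2 y2.
Proof. by case: HN. Qed.

Lemma N_scale (a : R) x y : N (a *: x) (a *: y) = `|a| * N x y.
Proof. by case: HN. Qed.

Lemma N_x0 x : N x 0 = `|x|.
Proof. by case: HN => _ _ _ []. Qed.

Lemma N_0y y : N 0 y = `|y|.
Proof. by case: HN => _ _ _ []. Qed.

Lemma N_gex x y : `|x| <= N x y.
Proof. by case: HN. Qed.

Lemma N_gey x y : `|y| <= 2 * N x y.
Proof.
have := N_tri x y (- x) 0; rewrite subrr addr0 N_0y N_x0 normrN.
have := N_gex x y; lra.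
Qed.

Lemma N_ge0 x y : 0 <= N x y.
Proof. exact: le_trans (normr_ge0 x) (N_gex x y). Qed.

Lemma dns_bound xs ys x y : dual_elt xs -> dual_elt ys ->
  dnorm_sum N xs ys <= 1 -> `|xs x + ys y| <= N x y.
Proof.
move=> dx dy h1.
have hub : has_ubound [set r | exists x y, N x y <= 1 /\ r = `|xs x + ys y|].
  exists (dnorm xs + 2 * dnorm ys) => _ [x' [y' [n1 ->]]].
  apply: le_trans (ler_normD _ _) _.
  have := dnorm_bound x' dx; have := dnorm_bound y' dy.
  have := N_gex x' y'; have := N_gey x' y'.
  have := dnorm_ge0 dx; have := dnorm_ge0 dy; have := normr_ge0 x'; have := normr_ge0 y'.
  nra.
have [n0|n0] := eqVneq (N x y) 0.
  have [-> ->] : x = 0 /\ y = 0 by case: HN => h _ _ _ _; exact: h.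
  by rewrite (dual_f0 dx) (dual_f0 dy) addr0 normr0 N_ge0.
have np : 0 < N x y by rewrite lt_def n0 N_ge0.
set c := (N x y)^-1.
have c0 : 0 < c by rewrite invr_gt0.
have Hm : [set r | exists x y, N x y <= 1 /\ r = `|xs x + ys y|] (`|xs (c *: x) + ys (c *: y)|).
  exists (c *: x), (c *: y); split => //.
  by rewrite N_scale gtr0_norm // /c mulVf.
have := le_sup_mem hub Hm.
rewrite (dual_scale c x dx) (dual_scale c y dy) -mulrDr normrM gtr0_norm // => h.
have := le_trans h h1; rewrite /c -ler_pdivlMl ?invr_gt0 // invrK mulr1 //.
Qed.

Lemma dns_le xs ys M : 0 <= M -> (forall x y, `|xs x + ys y| <= M * N x y) ->
  dnorm_sum N xs ys <= M.
Proof.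
move=> M0 h; apply: ge_sup; first by exists `|xs 0 + ys 0|, 0, 0; rewrite N_x0 normr0.
move=> _ [x [y [n1 ->]]]; apply: le_trans (h x y) _.
by rewrite -[X in _ <= X]mulr1 ler_wpM2l.
Qed.

End SumNorm.

Section HBsec.
Variables (R : realType) (V : normedModType R).

Definition subl (q : V -> R) :=
  [/\ (forall u v, q (u + v) <= q u + q v),
      (forall (a : R) u, 0 < a -> q (a *: u) <= a * q u) & q 0 = 0].

Lemma subl_homo q a u : subl q -> 0 < a -> q (a *: u) = a * q u.
Proof.
move=> [_ hq _] a0; apply/eqP; rewrite eq_le hq //=.
have := hq a^-1 (a *: u); rewrite invr_gt0 => /(_ a0).
rewrite scalerA mulVf ?gt_eqF // scale1r => h.
rewrite -(@ler_pM2l _ a^-1) ?invr_gt0 //.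
by rewrite mulrA mulVf ?gt_eqF // mul1r.
Qed.

Lemma subl_homo0 q t u : subl q -> 0 <= t -> q (t *: u) = t * q u.
Proof.
move=> sq; rewrite le_eqVlt => /orP[/eqP<-|]; last exact: subl_homo.
by case: sq => _ _ h0; rewrite scale0r h0 mul0r.
Qed.

Lemma subl_neg q u : subl q -> - q (- u) <= q u.
Proof.
move=> [hs _ h0]; have := hs u (- u); rewrite subrr h0.
by rewrite lerNl; lra.
Qed.

Definition rfun (q : V -> R) (v u : V) : R :=
  inf [set r | exists t : R, 0 <= t /\ r = q (u + t *: v) - t * q v].

Lemma rfun_lb q v u t : subl q -> 0 <= t -> - q (- u) <= q (u + t *: v) - t * q v.
Proof.
move=> sq t0; rewrite -(subl_homo0 v sq t0).
have [hs _ _] := sq.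
have := hs (u + t *: v) (- u); rewrite addrC addKr => h.
lra.
Qed.

Lemma rfun_hasl q v u : subl q ->
  has_lbound [set r | exists t : R, 0 <= t /\ r = q (u + t *: v) - t * q v].
Proof. by move=> sq; exists (- q (- u)) => _ [t [t0 ->]]; exact: rfun_lb. Qed.

Lemma rfun_le q v u t : subl q -> 0 <= t -> rfun q v u <= q (u + t *: v) - t * q v.
Proof. by move=> sq t0; apply: (ge_inf (rfun_hasl v u sq)); exists t. Qed.

Lemma rfun_ge q v u b : subl q ->
  (forall t, 0 <= t -> b <= q (u + t *: v) - t * q v) -> b <= rfun q v u.
Proof.
move=> sq h; apply: lb_le_inf; first by exists (q (u + 0 *: v) - 0 * q v), 0.
by move=> _ [t [t0 ->]]; exact: h.
Qed.

Lemma rfun_leq q v u : subl q -> rfun q v u <= q u.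
Proof. by move=> sq; have := rfun_le v u sq (lexx 0); rewrite scale0r addr0 mul0r subr0. Qed.

Lemma rfun_negv q v : subl q -> rfun q v (- v) <= - q v.
Proof.
move=> sq; have := rfun_le v (- v) sq ler01.
by rewrite scale1r addNr mul1r; case: sq => _ _ ->; rewrite add0r.
Qed.

Lemma rfun_subl q v : subl q -> subl (rfun q v).
Proof.
move=> sq; have [hs hh h0] := sq; split.
- move=> u1 u2.
  suff : rfun q v (u1 + u2) - rfun q v u2 <= rfun q v u1 by lra.
  apply: rfun_ge => // t1 t10.
  suff : rfun q v (u1 + u2) - (q (u1 + t1 *: v) - t1 * q v) <= rfun q v u2 by lra.
  apply: rfun_ge => // t2 t20.
  suff : rfun q v (u1 + u2) <= (q (u1 + t1 *: v) - t1 * q v) + (q (u2 + t2 *: v) - t2 * q v) by lra.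
  apply: le_trans (rfun_le v _ sq (addr_ge0 t10 t20)) _.
  have := hs (u1 + t1 *: v) (u2 + t2 *: v).
  rewrite addrACA -scalerDl => h.
  rewrite mulrDl; lra.
- move=> a u a0; rewrite -ler_pdivrMl //; apply: rfun_ge => // t t0.
  rewrite ler_pdivrMl //.
  apply: le_trans (rfun_le v _ sq (mulr_ge0 (ltW a0) t0)) _.
  rewrite -scalerA -scalerDr (subl_homo _ sq a0) -mulrA mulrBr; exact: lexx.
- apply/eqP; rewrite eq_le; apply/andP; split.
  + by have := rfun_leq v 0 sq; rewrite h0.
  + apply: rfun_ge => // t t0; have := rfun_lb v 0 sq t0; by rewrite oppr0 h0 oppr0.
Qed.

Lemma subl_norm : subl (fun v : V => `|v|).
Proof.
split; first by move=> u v; exact: ler_normD.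
- by move=> a u a0; rewrite normrZ gtr0_norm.
- exact: normr0.
Qed.

Definition p0 (x : V) := rfun (fun v : V => `|v|) x.

Definition TT (x : V) := {q : V -> R | subl q /\ forall u, q u <= p0 x u}.

Lemma HB_norming (x : V) : exists f : V -> R,
  (forall (a : R) (u v : V), f (a *: u + v) = a * f u + f v) /\
  (forall v, `|f v| <= `|v|) /\ f x = `|x|.
Proof.
have sp0 : subl (p0 x) by exact: rfun_subl subl_norm.
pose Rel (s t : TT x) := `[< forall u, sval t u <= sval s u >].
have lbT (s : TT x) u : - p0 x (- u) <= sval s u.
  case: s => q [sq hq] /=; apply: le_trans (subl_neg u sq); by rewrite lerN2.
have [q qmax] : exists t, forall s, Rel t s -> s = t.
  apply: (@Zorn _ Rel).
  - by move=> t; apply/asboolP => u.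
  - move=> r s t /asboolP h1 /asboolP h2; apply/asboolP => u; exact: le_trans (h2 u) (h1 u).
  - move=> [s hs] [t ht] /asboolP h1 /asboolP h2 /=.
    have E : s = t by apply: funext => u; apply/eqP; rewrite eq_le h1 h2.
    subst t; congr exist; exact: Prop_irrelevance.
  - move=> A Atot.
    have [[s0 As0]|A0] := pselect (exists s, A s); last first.
      by exists (exist _ (p0 x) (conj sp0 (fun u => lexx _))) => s As; exfalso; apply: A0; exists s.
    pose m u := inf [set r | exists s, A s /\ r = sval s u].
    have mhas u : has_lbound [set r | exists s, A s /\ r = sval s u].
      by exists (- p0 x (- u)) => _ [s [_ ->]].
    have mle u s : A s -> m u <= sval s u.
      by move=> As; apply: (ge_inf (mhas u)); exists s.
    have mge u b : (forall s, A s -> b <= sval s u) -> b <= m u.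
      by move=> h; apply: lb_le_inf; [exists (sval s0 u), s0 | move=> _ [s [As ->]]; exact: h].
    have sm : subl m.
      split.
      - move=> u v.
        suff : m (u + v) - m v <= m u by lra.
        apply: (mge _) => s1 As1.
        suff : m (u + v) - sval s1 u <= m v by lra.
        apply: (mge _) => s2 As2.
        suff : m (u + v) <= sval s1 u + sval s2 v by lra.
        have [/asboolP h|/asboolP h] := Atot s1 s2 As1 As2.
        + have h1 := mle (u + v) s2 As2; move: h h1.
          case: s2 {As2} => q2 [[hs2 _ _] _] /= h h1.
          have := hs2 u v; have := h u; lra.
        + have h1 := mle (u + v) s1 As1; move: h h1.
          case: s1 {As1} => q1 [[hs1 _ _] _] /= h h1.
          have := hs1 u v; have := h v; lra.
      - move=> a u a0; rewrite -ler_pdivrMl //; apply: (mge _) => s As.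
        rewrite ler_pdivrMl //; apply: le_trans (mle _ _ As) _.
        by case: s {As} => q [[_ hh _] _] /=; exact: hh.
      - have z s : A s -> sval s 0 = 0 by case: s => q [[_ _ h0] _] /= _.
        apply/eqP; rewrite eq_le; apply/andP; split.
        + by rewrite -(z s0 As0); exact: mle.
        + by apply: (mge _) => s As; rewrite z.
    have mp0 u : m u <= p0 x u.
      apply: le_trans (mle u s0 As0) _; by have [_ h] := svalP s0.
    exists (exist _ m (conj sm mp0)) => s As; apply/asboolP => u /=; exact: mle.
case: q qmax => q [sq qp] qmax.
have qneg v : q (- v) = - q v.
  have sr : subl (rfun q v) by exact: rfun_subl.
  have rp : forall u, rfun q v u <= p0 x u by move=> u; apply: le_trans (rfun_leq _ _ sq) (qp u).
  have := qmax (exist _ (rfun q v) (conj sr rp)).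
  have Rl : Rel (exist _ q (conj sq qp)) (exist _ (rfun q v) (conj sr rp)).
    by apply/asboolP => u /=; exact: rfun_leq.
  move=> /(_ Rl) [E].
  apply/eqP; rewrite eq_le; apply/andP; split.
  + by have := rfun_negv v sq; rewrite E.
  + by rewrite lerNl; exact: subl_neg.
have qadd u v : q (u + v) = q u + q v.
  have [hs _ _] := sq; apply/eqP; rewrite eq_le hs /=.
  have := hs (- u) (- v); rewrite -opprD !qneg; lra.
have qscal (a : R) u : q (a *: u) = a * q u.
  have [a0|a0|->] := ltgtP a 0; last by rewrite scale0r mul0r; case: (sq).
  - rewrite -[a]opprK scaleNr qneg (subl_homo _ sq) ?oppr_gt0 //.
    lra.
  - exact: subl_homo.
have qnorm v : q v <= `|v|.
  apply: le_trans (qp v) _; exact: rfun_leq subl_norm.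
exists q; split; first by move=> a u v; rewrite qadd qscal.
split.
- move=> v; rewrite ler_norml qnorm andbT lerNl -qneg -(normrN v); exact: qnorm.
- apply/eqP; rewrite eq_le qnorm /= -lerN2 -qneg.
  apply: le_trans (qp _) _; exact: rfun_negv subl_norm.
Qed.

End HBsec.

Lemma sqrt_sum_le (R : realType) (a s : R) : 0 <= a -> 0 <= s ->
  Num.sqrt (a ^+ 2 + s) <= a + Num.sqrt s.
Proof.
move=> a0 s0; apply: sq_le; [exact: sqrtr_ge0| by rewrite addr_ge0 ?sqrtr_ge0 |].
rewrite sqr_sqrtr ?addr_ge0 ?sqr_ge0 //.
have h := sqr_sqrtr s0; have := sqrtr_ge0 s; nra.
Qed.

Lemma le_sqrt_sum1 (R : realType) (a s : R) : 0 <= a -> 0 <= s -> a <= Num.sqrt (a ^+ 2 + s).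
Proof.
move=> a0 s0; rewrite -{1}(ger0_norm a0) -sqrtr_sqr ler_sqrt ?addr_ge0 ?sqr_ge0 //.
by rewrite lerDl.
Qed.

Lemma le_sqrt_sum2 (R : realType) (a s : R) : 0 <= s -> Num.sqrt s <= Num.sqrt (a ^+ 2 + s).
Proof. by move=> s0; rewrite ler_sqrt ?addr_ge0 ?sqr_ge0 // lerDr sqr_ge0. Qed.

Lemma le_of_theta (R : realType) (a b : R) : 0 <= a -> 0 <= b ->
  (forall t, 0 < t -> t < 1 -> t * a <= b) -> a <= b.
Proof.
move=> a0 b0 h; apply/ler_addgt0Pr => e e0.
have [ea|ae] := leP a e; first by lra.
have a0' : 0 < a by lra.
have := h (1 - e / a); rewrite subr_gt0 ltr_pdivrMr // mul1r => /(_ ae).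
rewrite ltrBlDr ltrDl divr_gt0 // => /(_ isT).
rewrite mulrBl mul1r mulrAC -mulrA mulfV ?gt_eqF // mulr1; lra.
Qed.

Section Main.
Variables (R : realType) (X : normedModType R) (Y : nat -> normedModType R)
  (N : forall k, X -> Y k -> R).
Arguments N : clear implicits.
Hypothesis HN : forall k, sum_norm (N k).

Local Notation S y := (rsum (fun k => `|y k| ^+ 2)).

Lemma S_ge0 (y : forall k, Y k) : in_Sigma y -> 0 <= S y.
Proof. by move=> sy; apply: rsum_ge0 => // k; apply: sqr_ge0. Qed.

Lemma Lambda_facts xs ys al : in_Lambda N xs ys al ->
  (forall x, `|xs x| <= `|x|) /\ (forall k v, `|ys k v| <= `|v|).
Proof.
move=> [dx dys hd _ _]; split.
- move=> x; have := dns_bound (HN 0) x 0 dx (dys 0) (hd 0).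
  by rewrite (dual_f0 (dys 0)) addr0 N_x0.
- move=> k v; have := dns_bound (HN k) 0 v dx (dys k) (hd k).
  by rewrite (dual_f0 dx) add0r N_0y.
Qed.

Lemma eval_bound xs ys al x (y : forall k, Y k) : in_Lambda N xs ys al -> in_Sigma y ->
  `|Lambda_eval xs ys al x y| <= `|x| + Num.sqrt (S y).
Proof.
move=> hL sy; have [hx hy] := Lambda_facts hL.
have [_ _ _ hal [cal ral]] := hL.
have a0 k : 0 <= al k by have /andP[] := hal k.
have hw' : forall k, `|al k * ys k (y k)| <= al k * `|y k|.
  by move=> k; rewrite normrM ger0_norm // ler_wpM2l.
have [_ hw] := @cs_series R al (fun k => `|y k|) (fun k => al k * ys k (y k)) a0
  (fun k => normr_ge0 _) cal sy hw'.
rewrite /Lambda_eval; apply: le_trans (ler_normD _ _) _; apply: lerD => //.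
apply: le_trans hw _.
have s1 : Num.sqrt (rsum (fun k => al k ^+ 2)) <= 1.
  by rewrite -sqrtr1 ler_sqrt.
have := sqrtr_ge0 (rsum (fun k => `|y k| ^+ 2)); have := sqrtr_ge0 (rsum (fun k => al k ^+ 2)).
nra.
Qed.

Lemma Lambda0 : in_Lambda N (fun _ => 0) (fun k _ => 0) (fun _ => 0).
Proof.
split; [exact: dual0 | move=> k; exact: dual0 | | | ].
- by move=> k; apply: dns_le => // x y; rewrite addr0 normr0 mul1r N_ge0.
- by move=> k; rewrite lexx ler01.
- have -> : (fun k : nat => (0 : R) ^+ 2) = fun _ => 0 by apply: funext => k; rewrite expr0n.
  by split; [exact: summable0 | rewrite rsum0].
Qed.

Lemma Sigma_has x (y : forall k, Y k) : in_Sigma y ->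
  has_ubound [set r | exists xs ys al, in_Lambda N xs ys al /\ r = `|Lambda_eval xs ys al x y|].
Proof.
move=> sy; exists (`|x| + Num.sqrt (S y)) => _ [xs [ys [al [hL ->]]]].
exact: eval_bound.
Qed.

Lemma Sigma_ub x (y : forall k, Y k) : in_Sigma y -> Sigma_norm N x y <= `|x| + Num.sqrt (S y).
Proof.
move=> sy; apply: ge_sup.
  by exists (`|Lambda_eval (fun _ => 0) (fun k _ => 0) (fun _ => 0) x y|), (fun _ => 0), (fun k _ => 0), (fun _ => 0); split => //; exact: Lambda0.
move=> _ [xs [ys [al [hL ->]]]]; exact: eval_bound.
Qed.

Lemma Sigma_ge x (y : forall k, Y k) xs ys al : in_Sigma y -> in_Lambda N xs ys al ->
  `|Lambda_eval xs ys al x y| <= Sigma_norm N x y.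
Proof. move=> sy hL; apply: le_sup_mem (Sigma_has x sy) _; by exists xs, ys, al. Qed.

Lemma Sigma_ge_x x (y : forall k, Y k) : in_Sigma y -> `|x| <= Sigma_norm N x y.
Proof.
move=> sy; have [f [lin [fb fx]]] := HB_norming x.
have df : dual_elt f by exact: dual_of.
have hL : in_Lambda N f (fun k _ => 0) (fun _ => 0).
  have [_ d0 _ h1 h2] := Lambda0; split => //.
  move=> k; apply: dns_le => // x' y'; rewrite addr0 mul1r.
  exact: le_trans (fb x') (N_gex (HN k) x' y').
have := Sigma_ge x sy hL; rewrite /Lambda_eval.
have -> : (fun k => 0 * (fun (k : nat) (_ : Y k) => (0 : R)) k (y k)) = fun _ => 0.
  by apply: funext => k; rewrite mul0r.
by rewrite rsum0 addr0 fx normr_id.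
Qed.

Lemma Sigma_ge_y x (y : forall k, Y k) : in_Sigma y -> 2^-1 * Num.sqrt (S y) <= Sigma_norm N x y.
Proof.
move=> sy; have S0 := S_ge0 sy.
have [Sz|Sp] := eqVneq (S y) 0.
  rewrite Sz sqrtr0 mulr0; exact: le_trans (normr_ge0 x) (Sigma_ge_x x sy).
have Spos : 0 < S y by rewrite lt_def Sp S0.
have sq0 : 0 < Num.sqrt (S y) by rewrite sqrtr_gt0.
have hg : forall k, exists f : Y k -> R,
   (forall (a : R) (u v : Y k), f (a *: u + v) = a * f u + f v) /\
   (forall v, `|f v| <= `|v|) /\ f (y k) = `|y k| by move=> k; exact: HB_norming.
pose g k := sval (cid (hg k)).
have gP k : (forall (a : R) (u v : Y k), g k (a *: u + v) = a * g k u + g k v) /\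
   (forall v, `|g k v| <= `|v|) /\ g k (y k) = `|y k| by exact: (svalP (cid (hg k))).
pose ys k (v : Y k) := 2^-1 * g k v.
pose al k := `|y k| / Num.sqrt (S y).
have y2 k : 0 <= `|y k| ^+ 2 by apply: sqr_ge0.
have alsq : (fun k => al k ^+ 2) = (fun k => (S y)^-1 * `|y k| ^+ 2).
  apply: funext => k; rewrite /al expr_div_n sqr_sqrtr // mulrC //.
have hL : in_Lambda N (fun _ => 0) ys al.
  have [d0 _ _ _ _] := Lambda0.
  split => //.
  - move=> k; apply: dualZ; have [l [b _]] := gP k; exact: dual_of.
  - move=> k; apply: dns_le => // x' v; rewrite add0r mul1r /ys normrM.
    have [_ [b _]] := gP k; have := b v; have := N_gey (HN k) x' v.
    rewrite ger0_norm ?invr_ge0 //; lra.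
  - move=> k; apply/andP; split; first by rewrite /al divr_ge0 ?sqrtr_ge0.
    rewrite /al ler_pdivrMr // mul1r -(ger0_norm (normr_ge0 (y k))) -sqrtr_sqr ler_sqrt //.
    exact: (@term_le_rsum R (fun k => `|y k| ^+ 2) k y2 sy).
  - rewrite alsq; split; first exact: summable_scale.
    by rewrite rsum_scale // mulVf.
have := Sigma_ge x sy hL; rewrite /Lambda_eval add0r.
have -> : (fun k => al k * ys k (y k)) = fun k => (2^-1 / Num.sqrt (S y)) * `|y k| ^+ 2.
  apply: funext => k; rewrite /ys /al; have [_ [_ ->]] := gP k.
  by rewrite expr2; field; rewrite gt_eqF.
rewrite rsum_scale // => h; apply: le_trans h.
rewrite ger0_norm; last by rewrite mulr_ge0 ?divr_ge0 ?sqrtr_ge0.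
have E : 2^-1 / Num.sqrt (S y) * S y = 2^-1 * Num.sqrt (S y).
  set s := Num.sqrt (S y); have Ss : S y = s * s by rewrite /s -expr2 sqr_sqrtr.
  by rewrite Ss; field; rewrite gt_eqF.
by rewrite E.
Qed.


Lemma in_Sigma0 : in_Sigma (fun k => (0 : Y k)).
Proof.
rewrite /in_Sigma; have -> : (fun k => `|(0 : Y k)| ^+ 2) = fun _ => (0 : R).
  by apply: funext => k; rewrite normr0 expr0n.
exact: summable0.
Qed.

Lemma S0 : S (fun k => (0 : Y k)) = 0.
Proof.
have -> : (fun k => `|(0 : Y k)| ^+ 2) = fun _ => (0 : R).
  by apply: funext => k; rewrite normr0 expr0n.
exact: rsum0.
Qed.

Section PartB.
Variables (xs : X -> R) (ys : forall k, Y k -> R).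
Arguments ys : clear implicits.
Hypotheses (dx : dual_elt xs) (dys : forall k, dual_elt (ys k))
  (cT : summable_nn (fun k => dnorm (ys k) ^+ 2)).

Local Notation T := (rsum (fun k => dnorm (ys k) ^+ 2)).

Lemma B_bound x (y : forall k, Y k) : in_Sigma y -> Sigma_norm N x y <= 1 ->
  summable_nn (fun k => ys k (y k)) /\
  `|xs x + rsum (fun k => ys k (y k))| <= dnorm xs + 2 * Num.sqrt T.
Proof.
move=> sy s1.
have D0 k : 0 <= dnorm (ys k) by exact: dnorm_ge0.
have [cw hw] := @cs_series R (fun k => dnorm (ys k)) (fun k => `|y k|) (fun k => ys k (y k))
  D0 (fun k => normr_ge0 _) cT sy (fun k => dnorm_bound (y k) (dys k)).
split => //.
have hx := Sigma_ge_x x sy; have hy := Sigma_ge_y x sy.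
apply: le_trans (ler_normD _ _) _.
have := dnorm_bound x dx; have := dnorm_ge0 dx.
have := sqrtr_ge0 T; have := sqrtr_ge0 (S y); have := normr_ge0 x.
nra.
Qed.

Lemma Bd_has : has_ubound [set r | exists x y, in_Sigma y /\ Sigma_norm N x y <= 1 /\
                           r = `|xs x + rsum (fun k => ys k (y k))|].
Proof.
exists (dnorm xs + 2 * Num.sqrt T) => _ [x [y [sy [s1 ->]]]].
by have [] := B_bound sy s1.
Qed.

Lemma Bd_ub : Sigma_dnorm N xs ys <= dnorm xs + 2 * Num.sqrt T.
Proof.
apply: ge_sup.
  exists (`|xs 0 + rsum (fun k => ys k ((fun k => (0 : Y k)) k))|), 0, (fun k => (0 : Y k)).
  split; first exact: in_Sigma0.
  split => //; apply: le_trans (Sigma_ub 0 in_Sigma0) _; rewrite S0 sqrtr0 normr0 addr0; exact: ler01.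
move=> _ [x [y [sy [s1 ->]]]]; by have [] := B_bound sy s1.
Qed.

Lemma Bd_mem x (y : forall k, Y k) : in_Sigma y -> Sigma_norm N x y <= 1 ->
  `|xs x + rsum (fun k => ys k (y k))| <= Sigma_dnorm N xs ys.
Proof. move=> sy s1; apply: le_sup_mem Bd_has _; by exists x, y. Qed.

Lemma Bd_lb1 : dnorm xs <= Sigma_dnorm N xs ys.
Proof.
apply: ge_sup; first by exists `|xs 0|, 0; rewrite normr0.
move=> _ [v [v1 ->]].
have := Bd_mem (x := v) in_Sigma0 _.
have -> : (fun k => ys k ((fun k => (0 : Y k)) k)) = fun _ => 0.
  by apply: funext => k; rewrite (dual_f0 (dys k)).
rewrite rsum0 addr0; apply.
apply: le_trans (Sigma_ub v in_Sigma0) _; by rewrite S0 sqrtr0 addr0.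
Qed.

Lemma Bd_lb2 : Num.sqrt T <= Sigma_dnorm N xs ys.
Proof.
have D0 k : 0 <= dnorm (ys k) by exact: dnorm_ge0.
have D20 k : 0 <= dnorm (ys k) ^+ 2 by exact: sqr_ge0.
have T0 : 0 <= T by exact: rsum_ge0.
have Sd0 : 0 <= Sigma_dnorm N xs ys by exact: le_trans (dnorm_ge0 dx) Bd_lb1.
have [Tz|Tp] := eqVneq T 0; first by rewrite Tz sqrtr0.
have Tpos : 0 < T by rewrite lt_def Tp T0.
have sq0 : 0 < Num.sqrt T by rewrite sqrtr_gt0.
apply: le_of_theta; [exact: sqrtr_ge0 | exact: Sd0 | ].
move=> t t0 t1.
have hv : forall k, exists v : Y k, `|v| <= 1 /\ t * dnorm (ys k) <= ys k v.
  move=> k; have [Dz|Dp] := eqVneq (dnorm (ys k)) 0.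
    by exists 0; rewrite normr0 ler01 Dz mulr0 (dual_f0 (dys k)).
  have Dpos : 0 < dnorm (ys k) by rewrite lt_def Dp D0.
  have e0 : 0 < (1 - t) * dnorm (ys k) by rewrite mulr_gt0 // subr_gt0.
  have [v [v1 hv]] := dnorm_adh (dys k) e0.
  by exists v; split => //; apply: le_trans hv; lra.
pose v k := sval (cid (hv k)).
have vP k : `|v k| <= 1 /\ t * dnorm (ys k) <= ys k (v k) by exact: (svalP (cid (hv k))).
pose y k := (dnorm (ys k) / Num.sqrt T) *: v k.
have c0 k : 0 <= dnorm (ys k) / Num.sqrt T by rewrite divr_ge0 // sqrtr_ge0.
have ny k : `|y k| <= dnorm (ys k) / Num.sqrt T.
  rewrite /y normrZ ger0_norm //; have [v1 _] := vP k.
  by rewrite -[X in _ <= X]mulr1 ler_wpM2l.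
have ny2 k : `|y k| ^+ 2 <= T^-1 * dnorm (ys k) ^+ 2.
  have h2 : `|y k| ^+ 2 <= (dnorm (ys k) / Num.sqrt T) ^+ 2.
    have := ny k; have := normr_ge0 (y k); rewrite !expr2; nra.
  by move: h2; rewrite expr_div_n sqr_sqrtr // mulrC.
have sy : in_Sigma y.
  apply: summable_le (fun k => sqr_ge0 _) ny2 _; exact: summable_scale.
have s1 : Sigma_norm N 0 y <= 1.
  have hu := Sigma_ub 0 sy. apply: (le_trans hu); rewrite normr0 add0r -sqrtr1 ler_sqrt //.
  have hh := (@rsum_le R (fun k => `|y k| ^+ 2) (fun k => T^-1 * dnorm (ys k) ^+ 2) sy (summable_scale (c := T^-1) cT) ny2).
  apply: le_trans hh _.
  by rewrite rsum_scale // mulVf.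
have [cw _] := B_bound sy s1.
have := Bd_mem sy s1; rewrite (dual_f0 dx) add0r.
apply: le_trans; apply: le_trans (ler_norm _).
have -> : t * Num.sqrt T = rsum (fun k => (t / Num.sqrt T) * dnorm (ys k) ^+ 2).
  rewrite rsum_scale //.
  set s := Num.sqrt T; have Ts : T = s * s by rewrite /s -expr2 sqr_sqrtr.
  by rewrite Ts; field; rewrite gt_eqF.
apply: rsum_le => //; first exact: summable_scale.
move=> k /=; rewrite /y dual_scale //; have [_ h] := vP k.
have -> : t / Num.sqrt T * dnorm (ys k) ^+ 2 = (dnorm (ys k) / Num.sqrt T) * (t * dnorm (ys k)).
  by field; rewrite gt_eqF.
by apply: ler_wpM2l; [exact: c0 | exact: h].
Qed.

End PartB.

End Main.

Unset Implicit Arguments.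
Local Close Scope classical_set_scope.

Theorem lemma2p2 (R : realType) (X : completeNormedModType R)
  (Y : nat -> completeNormedModType R) (N : forall k, X -> Y k -> R)
  (HN : forall k, sum_norm (N k)) :
  (* (A) *)
  (forall (x : X) (y : forall k, Y k), in_Sigma y ->
     Num.max `|x| (2^-1 * Num.sqrt (rsum (fun k => `|y k| ^+ 2)))
       <= Sigma_norm N x y
     /\ Sigma_norm N x y <= `|x| + Num.sqrt (rsum (fun k => `|y k| ^+ 2)))
  /\
  (* (A), "in particular": ||.||_Sigma is equivalent to the l^2-sum norm *)
  (exists c C : R, 0 < c /\ 0 < C /\
     forall (x : X) (y : forall k, Y k), in_Sigma y ->
       c * l2sum_norm x y <= Sigma_norm N x y /\ Sigma_norm N x y <= C * l2sum_norm x y)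
  /\
  (* (B) *)
  (forall (xs : X -> R) (ys : forall k, Y k -> R),
     dual_elt xs -> (forall k, dual_elt (ys k)) ->
     summable_nn (fun k => dnorm (ys k) ^+ 2) ->
     Num.max (dnorm xs) (Num.sqrt (rsum (fun k => dnorm (ys k) ^+ 2)))
       <= Sigma_dnorm N xs ys
     /\ Sigma_dnorm N xs ys
       <= dnorm xs + 2 * Num.sqrt (rsum (fun k => dnorm (ys k) ^+ 2))).
Proof.
split.
  move=> x y sy; split; last exact: Sigma_ub.
  by rewrite ge_max Sigma_ge_x // Sigma_ge_y.
split.
  exists (4^-1), 2; split; first by rewrite invr_gt0; lra.
  split; first lra.
  move=> x y sy; rewrite /l2sum_norm.
  have S0 := S_ge0 sy; have x0 := normr_ge0 x.
  have h1 := sqrt_sum_le x0 S0; have h2 := le_sqrt_sum1 x0 S0.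
  have h3 := le_sqrt_sum2 `|x| S0.
  have hx := Sigma_ge_x HN x sy; have hy := Sigma_ge_y HN x sy; have hu := Sigma_ub HN x sy.
  split; lra.
move=> xs ys dx dys cT; split; last exact: Bd_ub.
by rewrite ge_max Bd_lb1 // Bd_lb2.
Qed.
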